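(* Let $C=\{(s,t)\in\mathbb{Z}^\omega\times\mathbb{Z}^\omega\colon t_n\le s_n\le 0\text{ for every }n\in\omega\}$. Then: (a) for every $t\in\mathbb{Z}^\omega$ the section $\{s\in\mathbb{Z}^\omega\colon (s,t)\in C\}$ is Haar meager in $\mathbb{Z}^\omega$; (b) the set of those $s\in\mathbb{Z}^\omega$ for which the section $\{t\in\mathbb{Z}^\omega\colon (s,t)\in C\}$ is not Haar meager in $\mathbb{Z}^\omega$ is itself not Haar meager in $\mathbb{Z}^\omega$; (c) $C$ is not Haar meager in $\mathbb{Z}^\omega\times\mathbb{Z}^\omega$ (indeed $C$ contains a translate of every compact subset of $\mathbb{Z}^\omega\times\mathbb{Z}^\omega$).
   Context: $\mathbb{Z}^\omega$ is the abelian Polish group of all integer sequences with coordinatewise addition and the product topology (discrete topology on $\mathbb{Z}$). For an abelian Polish group $G$, a set $A\subseteq G$ is Haar meager if there exist a Borel set $B\supseteq A$, a compact metric space $K$ and a continuous map $f\colon K\to G$ such that $f^{-1}(x+B)$ is meager in $K$ for every $x\in G$. *)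

(* Defs.v *)
From Stdlib Require Import Reals ZArith List.
Open Scope R_scope.

Inductive Borel {G : Type} (isOpen : (G -> Prop) -> Prop) : (G -> Prop) -> Prop :=
| Borel_open : forall U, isOpen U -> Borel isOpen U
| Borel_compl : forall S, Borel isOpen S -> Borel isOpen (fun x => ~ S x)
| Borel_union : forall S : nat -> G -> Prop,
    (forall n, Borel isOpen (S n)) -> Borel isOpen (fun x => exists n, S n x)
| Borel_ext : forall S T, Borel isOpen S -> (forall x, S x <-> T x) -> Borel isOpen T.

Definition compact_in {G : Type} (isOpen : (G -> Prop) -> Prop) (S : G -> Prop) : Prop :=
  forall (I : Type) (U : I -> G -> Prop),
    (forall i, isOpen (U i)) ->
    (forall x, S x -> exists i, U i x) ->
    exists l : list I, forall x, S x -> exists i, In i l /\ U i x.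

Definition interior {G : Type} (isOpen : (G -> Prop) -> Prop) (S : G -> Prop) (x : G) : Prop :=
  exists U, isOpen U /\ U x /\ forall y, U y -> S y.

Definition closure {G : Type} (isOpen : (G -> Prop) -> Prop) (S : G -> Prop) (x : G) : Prop :=
  forall U, isOpen U -> U x -> exists y, U y /\ S y.

Definition nowhere_dense {G : Type} (isOpen : (G -> Prop) -> Prop) (N : G -> Prop) : Prop :=
  forall x, ~ interior isOpen (closure isOpen N) x.

Definition meager {G : Type} (isOpen : (G -> Prop) -> Prop) (S : G -> Prop) : Prop :=
  exists N : nat -> G -> Prop,
    (forall n, nowhere_dense isOpen (N n)) /\
    (forall x, S x -> exists n, N n x).

Record MetricSpace := {
  ms_carrier :> Type;
  ms_dist : ms_carrier -> ms_carrier -> R;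
  ms_dist_nonneg : forall x y, 0 <= ms_dist x y;
  ms_dist_eq0 : forall x y, ms_dist x y = 0 <-> x = y;
  ms_dist_sym : forall x y, ms_dist x y = ms_dist y x;
  ms_dist_tri : forall x y z, ms_dist x z <= ms_dist x y + ms_dist y z
}.

Definition ms_open (K : MetricSpace) (U : K -> Prop) : Prop :=
  forall x, U x -> exists eps, 0 < eps /\
    forall y, ms_dist K x y < eps -> U y.

Definition compact_metric (K : MetricSpace) : Prop :=
  compact_in (ms_open K) (fun _ => True).

Definition continuous_into (K : MetricSpace) {G : Type}
  (isOpen : (G -> Prop) -> Prop) (f : K -> G) : Prop :=
  forall U, isOpen U -> ms_open K (fun k => U (f k)).

Definition translate {G : Type} (add : G -> G -> G) (x : G) (B : G -> Prop) (y : G) : Prop :=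
  exists b, B b /\ y = add x b.

(* Darji's definition; the witnessing compact metric space K is nonempty. *)
Definition HaarMeager {G : Type} (add : G -> G -> G)
  (isOpen : (G -> Prop) -> Prop) (A : G -> Prop) : Prop :=
  exists B : G -> Prop,
    Borel isOpen B /\ (forall a, A a -> B a) /\
    exists (K : MetricSpace) (f : K -> G),
      compact_metric K /\ (exists k : K, True) /\
      continuous_into K isOpen f /\
      forall x : G, meager (ms_open K) (fun k => translate add x B (f k)).

Definition Zw := nat -> Z.

Definition addZw (x y : Zw) : Zw := fun n => (x n + y n)%Z.

(* product topology of discrete Z's: basic opens are cylinders *)
Definition openZw (U : Zw -> Prop) : Prop :=
  forall x, U x -> exists m : nat,
    forall y, (forall i, (i < m)%nat -> y i = x i) -> U y.

Definition addZw2 (p q : Zw * Zw) : Zw * Zw :=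
  (addZw (fst p) (fst q), addZw (snd p) (snd q)).

Definition openZw2 (U : Zw * Zw -> Prop) : Prop :=
  forall p, U p -> exists m : nat,
    forall q, (forall i, (i < m)%nat -> fst q i = fst p i /\ snd q i = snd p i) -> U q.

Definition HaarMeagerZw (A : Zw -> Prop) : Prop := HaarMeager addZw openZw A.
Definition HaarMeagerZw2 (A : Zw * Zw -> Prop) : Prop := HaarMeager addZw2 openZw2 A.

Definition Cset (p : Zw * Zw) : Prop :=
  forall n, (snd p n <= fst p n <= 0)%Z.

(* Main.v *)
Require Import Defs.
From Stdlib Require Import Reals ZArith List Lra Lia ClassicalEpsilon Classical FunctionalExtensionality.
Open Scope R_scope.

Lemma hp_pos n : 0 < (1/2)^n.
Proof. apply pow_lt; lra. Qed.

Lemma hp_mono p k : (1/2)^(p+k) <= (1/2)^p.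
Proof.
  induction k. rewrite Nat.add_0_r; lra.
  rewrite Nat.add_succ_r. simpl. pose proof (hp_pos (p+k)). lra.
Qed.

Lemma hp_mono' p n : (p <= n)%nat -> (1/2)^n <= (1/2)^p.
Proof. intros H. replace n with (p + (n-p))%nat by lia. apply hp_mono. Qed.

Lemma hp_S m : (1/2)^(S m) < (1/2)^m.
Proof. simpl. pose proof (hp_pos m). lra. Qed.

Lemma hp_small eps : 0 < eps -> exists m, (1/2)^m < eps.
Proof.
  intros He. destruct (pow_lt_1_zero (1/2)) with (y := eps) as [N HN]; auto.
  rewrite Rabs_right; lra.
  exists N. specialize (HN N (le_n _)). rewrite Rabs_right in HN; auto.
  left; apply hp_pos.
Qed.

Definition diffP (a b : nat -> bool) (n : nat) :=
  a n <> b n /\ forall i, (i < n)%nat -> a i = b i.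

Lemma ex_diff a b : a <> b -> exists n, diffP a b n.
Proof.
  intros H.
  assert (exists n, a n <> b n) as [n Hn].
  { apply NNPP; intro C. apply H. apply functional_extensionality. intro x.
    apply NNPP; intro D. apply C; eauto. }
  revert Hn. induction n as [n IH] using lt_wf_ind. intros Hn.
  destruct (classic (forall i, (i < n)%nat -> a i = b i)) as [Hall|Hno].
  - exists n; split; auto.
  - apply not_all_ex_not in Hno as [i Hi].
    apply imply_to_and in Hi as [Hi1 Hi2]. eauto.
Qed.

Lemma diff_uniq a b n m : diffP a b n -> diffP a b m -> n = m.
Proof.
  intros [G1 G2] [G3 G4].
  destruct (Nat.lt_trichotomy n m) as [L|[L|L]]; auto.
  - exfalso; apply G1, G4, L.
  - exfalso; apply G3, G2, L.
Qed.

Definition cdist (a b : nat -> bool) : R :=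
  match excluded_middle_informative (a = b) with
  | left _ => 0
  | right H => (1/2)^(proj1_sig (constructive_indefinite_description _ (ex_diff a b H)))
  end.

Lemma cdist_spec a b :
  (a = b /\ cdist a b = 0) \/ (a <> b /\ exists n, diffP a b n /\ cdist a b = (1/2)^n).
Proof.
  unfold cdist. destruct (excluded_middle_informative (a = b)) as [E|E].
  - left; auto.
  - right. split; auto. destruct (constructive_indefinite_description _ _) as [n Hn]; simpl.
    eauto.
Qed.

Lemma cdist_nonneg a b : 0 <= cdist a b.
Proof.
  destruct (cdist_spec a b) as [[_ E]|[_ [n [_ E]]]]; rewrite E. lra. left; apply hp_pos.
Qed.

Lemma cdist_eq0 a b : cdist a b = 0 <-> a = b.
Proof.
  destruct (cdist_spec a b) as [[H E]|[H [n [_ E]]]]; rewrite E; split; intro; auto.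
  - pose proof (hp_pos n); lra.
  - contradiction.
Qed.

Lemma diffP_sym a b n : diffP a b n -> diffP b a n.
Proof. intros [H1 H2]; split; auto. intros i Hi; symmetry; auto. Qed.

Lemma cdist_sym a b : cdist a b = cdist b a.
Proof.
  destruct (cdist_spec a b) as [[H E]|[H [n [Hn E]]]];
  destruct (cdist_spec b a) as [[H' E']|[H' [n' [Hn' E']]]]; rewrite E, E'; auto.
  - subst; congruence.
  - subst; congruence.
  - apply diffP_sym in Hn'. rewrite (diff_uniq _ _ _ _ Hn Hn'). auto.
Qed.

Lemma cdist_tri a b c : cdist a c <= cdist a b + cdist b c.
Proof.
  pose proof (cdist_nonneg a b) as N1. pose proof (cdist_nonneg b c) as N2.
  destruct (cdist_spec a c) as [[H E]|[H [n [Hn E]]]]. lra.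
  destruct (cdist_spec a b) as [[H1 E1]|[H1 [p [Hp E1]]]].
  { subst b. lra. }
  destruct (cdist_spec b c) as [[H2 E2]|[H2 [q [Hq E2]]]].
  { subst c. lra. }
  rewrite E, E1, E2.
  pose proof (hp_pos p). pose proof (hp_pos q).
  destruct (le_lt_dec p n) as [L|L].
  - pose proof (hp_mono' _ _ L). lra.
  - destruct (le_lt_dec q n) as [L'|L'].
    + pose proof (hp_mono' _ _ L'). lra.
    + exfalso. destruct Hn as [Hn _]. apply Hn.
      destruct Hp as [_ Hp]; destruct Hq as [_ Hq]. rewrite Hp, Hq; auto.
Qed.

Definition Cantor : MetricSpace :=
  Build_MetricSpace (nat -> bool) cdist cdist_nonneg cdist_eq0 cdist_sym cdist_tri.

Definition agree (m : nat) (a b : nat -> bool) := forall i, (i < m)%nat -> a i = b i.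

Lemma dist_agree m a b : cdist a b < (1/2)^m -> agree m a b.
Proof.
  intros Hd i Hi.
  destruct (cdist_spec a b) as [[H E]|[H [n [[Hn1 Hn2] E]]]]. subst; auto.
  apply Hn2. destruct (le_lt_dec n m) as [L|L]; [|lia].
  pose proof (hp_mono' _ _ L). lra.
Qed.

Lemma agree_dist m a b : agree (S m) a b -> cdist a b < (1/2)^m.
Proof.
  intros Ha.
  destruct (cdist_spec a b) as [[H E]|[H [n [[Hn1 Hn2] E]]]].
  rewrite E; apply hp_pos.
  rewrite E. destruct (le_lt_dec (S m) n) as [L|L].
  - pose proof (hp_mono' _ _ L). pose proof (hp_S m). lra.
  - exfalso; apply Hn1, Ha, L.
Qed.

Definition cyl (p : list bool) (a : nat -> bool) :=
  forall i, (i < length p)%nat -> a i = nth i p false.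

Definition badc (I : Type) (U : I -> (nat -> bool) -> Prop) (p : list bool) :=
  ~ exists l : list I, forall a, cyl p a -> exists i, In i l /\ U i a.

Lemma cyl_ext p a : cyl p a -> cyl (p ++ a (length p) :: nil) a.
Proof.
  intros H i Hi. rewrite length_app in Hi; simpl in Hi.
  destruct (Nat.lt_ge_cases i (length p)).
  - rewrite app_nth1 by auto. auto.
  - assert (i = length p) by lia. subst. rewrite app_nth2 by lia.
    rewrite Nat.sub_diag. reflexivity.
Qed.

Lemma bad_ext I U p : badc I U p ->
  badc I U (p ++ false :: nil) \/ badc I U (p ++ true :: nil).
Proof.
  intros H. apply NNPP; intro C. apply not_or_and in C as [C1 C2].
  apply NNPP in C1 as [l1 H1]. apply NNPP in C2 as [l2 H2].
  apply H. exists (l1 ++ l2). intros a Ha.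
  pose proof (cyl_ext _ _ Ha) as Hb.
  destruct (a (length p)) eqn:E.
  - destruct (H2 a Hb) as [i [Hi Ui]]. exists i; split; auto. apply in_or_app; auto.
  - destruct (H1 a Hb) as [i [Hi Ui]]. exists i; split; auto. apply in_or_app; auto.
Qed.

Definition pick I U p : bool :=
  if excluded_middle_informative (badc I U (p ++ false :: nil)) then false else true.

Lemma pick_bad I U p : badc I U p -> badc I U (p ++ pick I U p :: nil).
Proof.
  intros H. unfold pick. destruct (excluded_middle_informative _); auto.
  destruct (bad_ext _ _ _ H); tauto.
Qed.

Fixpoint pre I U (n : nat) : list bool :=
  match n with 0 => nil | S n => pre I U n ++ pick I U (pre I U n) :: nil end.

Lemma pre_len I U n : length (pre I U n) = n.
Proof. induction n; simpl; auto. rewrite length_app, IHn; simpl; lia. Qed.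

Lemma pre_stable I U n i : (i < n)%nat -> nth i (pre I U n) false = nth i (pre I U (S i)) false.
Proof.
  induction n; intros Hi. lia.
  destruct (Nat.lt_ge_cases i n).
  - simpl pre at 1. rewrite app_nth1 by (rewrite pre_len; auto). auto.
  - assert (i = n) by lia. subst; auto.
Qed.

Lemma Cantor_compact : compact_metric Cantor.
Proof.
  intros I U HU Hcov. apply NNPP; intro C.
  assert (Hb : forall n, badc I U (pre I U n)).
  { induction n. simpl. intros [l Hl]. apply C. exists l. intros a _. apply Hl.
    intros i Hi; simpl in Hi; lia.
    simpl. apply pick_bad; auto. }
  set (al := fun n => nth n (pre I U (S n)) false).
  assert (Hal : forall n, cyl (pre I U n) al).
  { intros n i Hi. rewrite pre_len in Hi. unfold al. symmetry; apply pre_stable; auto. }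
  destruct (Hcov al Logic.I) as [i Hi].
  destruct (HU i al Hi) as [eps [He Hball]].
  destruct (hp_small eps He) as [m Hm].
  apply (Hb (S m)). exists (i :: nil). intros a Ha. exists i; split; [left; auto|].
  apply Hball. simpl. apply Rlt_trans with ((1/2)^m); auto.
  apply agree_dist. intros j Hj.
  specialize (Hal (S m) j). specialize (Ha j). rewrite pre_len in Hal, Ha.
  rewrite (Hal Hj), (Ha Hj). reflexivity.
Qed.

Lemma ball_open (K : MetricSpace) (x : K) r : ms_open K (fun z => ms_dist K x z < r).
Proof.
  intros z Hz. exists (r - ms_dist K x z). split. lra.
  intros w Hw. pose proof (ms_dist_tri K x z w). lra.
Qed.

Lemma dist_self (K : MetricSpace) (x : K) : ms_dist K x x = 0.
Proof. apply ms_dist_eq0; auto. Qed.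

Lemma baire (K : MetricSpace) (k0 : K) (N : nat -> K -> Prop) :
  compact_metric K -> (forall n, nowhere_dense (ms_open K) (N n)) ->
  (forall x, exists n, N n x) -> False.
Proof.
  intros cK HN Hcov.
  set (d := ms_dist K).
  assert (Hstep : forall n (p : K * R), exists q : K * R, 0 < snd p ->
     0 < snd q /\ (forall z, d (fst q) z <= snd q -> d (fst p) z < snd p) /\
     (forall z, d (fst q) z <= snd q -> ~ N n z)).
  { intros n [x r]. simpl.
    destruct (classic (0 < r)) as [Hr|Hr]; [|exists (x, r); intro; contradiction].
    assert (exists y, d x y < r /\ ~ closure (ms_open K) (N n) y) as [y [Hy1 Hy2]].
    { apply NNPP; intro C. apply (HN n x). exists (fun z => d x z < r).
      split. apply ball_open. split. unfold d; rewrite dist_self; auto.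
      intros y Hy. apply NNPP; intro D. apply C. eauto. }
    unfold closure in Hy2. apply not_all_ex_not in Hy2 as [U HU].
    apply imply_to_and in HU as [HUo HU]. apply imply_to_and in HU as [HUy HU].
    destruct (HUo y HUy) as [eps [He Heps]].
    exists (y, Rmin eps (r - d x y) / 2). intros _. simpl.
    pose proof (Rmin_l eps (r - d x y)). pose proof (Rmin_r eps (r - d x y)).
    assert (0 < Rmin eps (r - d x y)) by (apply Rmin_glb_lt; lra).
    split. lra. split.
    - intros z Hz. pose proof (ms_dist_tri K x y z). unfold d in *. lra.
    - intros z Hz Nz. apply HU. exists z. split; auto. apply Heps. unfold d in *. lra. }
  set (step := fun n p => proj1_sig (constructive_indefinite_description _ (Hstep n p))).
  assert (Hs : forall n p, 0 < snd p -> 0 < snd (step n p) /\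
     (forall z, d (fst (step n p)) z <= snd (step n p) -> d (fst p) z < snd p) /\
     (forall z, d (fst (step n p)) z <= snd (step n p) -> ~ N n z)).
  { intros n p. unfold step. destruct (constructive_indefinite_description _ _); simpl; auto. }
  set (sq := fix sq n := match n with 0 => (k0, 1) | S n => step n (sq n) end).
  assert (Hpos : forall n, 0 < snd (sq n)).
  { induction n. simpl; lra. apply (Hs n (sq n) IHn). }
  assert (Hnest : forall n z, d (fst (sq n)) z <= snd (sq n) ->
             forall k, (k <= n)%nat -> d (fst (sq k)) z <= snd (sq k)).
  { induction n; intros z Hz k Hk.
    - assert (k = 0%nat) by lia. subst; auto.
    - destruct (Nat.eq_dec k (S n)). subst; auto.
      apply IHn; [|lia]. left. apply (Hs n (sq n) (Hpos n)); auto. }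
  assert (exists y, forall k, d (fst (sq k)) y <= snd (sq k)) as [y Hy].
  { apply NNPP; intro C.
    assert (Hc : forall y, exists k, snd (sq k) < d (fst (sq k)) y).
    { intros y. apply NNPP; intro D. apply C. exists y. intro k.
      apply Rnot_lt_le. intro E. apply D; eauto. }
    destruct (cK nat (fun k y => snd (sq k) < d (fst (sq k)) y)) as [l Hl].
    { intros k z Hz. exists (d (fst (sq k)) z - snd (sq k)). split. lra.
      intros w Hw. pose proof (ms_dist_tri K (fst (sq k)) w z).
      pose proof (ms_dist_sym K z w). unfold d in *. lra. }
    { intros z _. apply Hc. }
    set (M := fold_right max 0%nat l).
    assert (HM : forall k, In k l -> (k <= M)%nat).
    { unfold M; clear. induction l; simpl; intros k Hk. contradiction.
      destruct Hk. subst; lia. specialize (IHl k H); lia. }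
    destruct (Hl (fst (sq M)) Logic.I) as [k [Hk1 Hk2]].
    assert (d (fst (sq k)) (fst (sq M)) <= snd (sq k)).
    { apply (Hnest M); auto. unfold d; rewrite dist_self. left; auto. }
    lra. }
  destruct (Hcov y) as [n Hn].
  apply ((proj2 (proj2 (Hs n (sq n) (Hpos n)))) y); auto.
  apply (Hy (S n)).
Qed.

Lemma not_HM_gen {G : Type} (add : G -> G -> G) (neg : G -> G)
  (isOpen : (G -> Prop) -> Prop) (A : G -> Prop) :
  (forall x y, y = add (neg x) (add x y)) ->
  (forall (K : MetricSpace) (f : K -> G), compact_metric K ->
      continuous_into K isOpen f -> exists x, forall k, A (add x (f k))) ->
  ~ HaarMeager add isOpen A.
Proof.
  intros Hneg H [B [_ [AB [K [f [cK [[k0 _] [cf Hm]]]]]]]].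
  destruct (H K f cK cf) as [x Hx].
  destruct (Hm (neg x)) as [N [HN Hc]].
  apply (baire K k0 N cK HN). intro k. apply Hc.
  exists (add x (f k)). split; auto.
Qed.

Lemma bound_compact {X : Type} (isOpen : (X -> Prop) -> Prop) (S : X -> Prop) (g : X -> Z) :
  compact_in isOpen S -> (forall m, isOpen (fun x => (Z.abs (g x) < m)%Z)) ->
  exists M, forall x, S x -> (Z.abs (g x) <= M)%Z.
Proof.
  intros HS Ho.
  destruct (HS Z (fun m x => (Z.abs (g x) < m)%Z) Ho) as [l Hl].
  { intros x _. exists (Z.abs (g x) + 1)%Z. lia. }
  exists (fold_right Z.max 0%Z l).
  assert (HM : forall i, In i l -> (i <= fold_right Z.max 0 l)%Z).
  { clear. induction l; simpl; intros i Hi. contradiction.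
    destruct Hi. subst; lia. specialize (IHl i H); lia. }
  intros x Hx. destruct (Hl x Hx) as [i [Hi1 Hi2]]. specialize (HM i Hi1). lia.
Qed.

Lemma choiceZ (P : nat -> Z -> Prop) : (forall n, exists M, P n M) -> exists M : nat -> Z, forall n, P n (M n).
Proof.
  intros H. exists (fun n => proj1_sig (constructive_indefinite_description _ (H n))).
  intro n. destruct (constructive_indefinite_description _ _); auto.
Qed.

Lemma zw_bound (K : MetricSpace) (f : K -> Zw) :
  compact_metric K -> continuous_into K openZw f ->
  exists M : nat -> Z, forall n k, (Z.abs (f k n) <= M n)%Z.
Proof.
  intros cK cf. apply (choiceZ (fun n M => forall k, (Z.abs (f k n) <= M)%Z)). intro n.
  destruct (bound_compact _ _ (fun k => f k n) cK) as [M HM].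
  { intro m. apply (cf (fun y => (Z.abs (y n) < m)%Z)).
    intros x Hx. exists (S n). intros y Hy. rewrite Hy; auto. }
  exists M. intro k. apply HM; auto.
Qed.

Lemma zw_neg x y : y = addZw (fun n => (- x n)%Z) (addZw x y).
Proof. apply functional_extensionality; intro n; unfold addZw; lia. Qed.

Lemma nonpos_section s : (forall n, (s n <= 0)%Z) -> ~ HaarMeagerZw (fun t => Cset (s, t)).
Proof.
  intros Hs. apply (not_HM_gen _ (fun x n => (- x n)%Z)). apply zw_neg.
  intros K f cK cf. destruct (zw_bound K f cK cf) as [M HM].
  exists (fun n => (s n - M n)%Z). intros k n. unfold addZw; simpl.
  specialize (HM n k). specialize (Hs n). lia.
Qed.

Lemma partb : ~ HaarMeagerZw (fun s => ~ HaarMeagerZw (fun t => Cset (s, t))).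
Proof.
  apply (not_HM_gen _ (fun x n => (- x n)%Z)). apply zw_neg.
  intros K f cK cf. destruct (zw_bound K f cK cf) as [M HM].
  exists (fun n => (- M n)%Z). intros k. apply nonpos_section.
  intro n. unfold addZw. specialize (HM n k). lia.
Qed.

Lemma part4 (Kset : Zw * Zw -> Prop) : compact_in openZw2 Kset ->
     exists x : Zw * Zw, forall k, Kset k -> Cset (addZw2 x k).
Proof.
  intros cK.
  assert (H1 : exists M : nat -> Z, forall n, forall p, Kset p -> (Z.abs (fst p n) <= M n)%Z).
  { apply (choiceZ (fun n M => forall p, Kset p -> (Z.abs (fst p n) <= M)%Z)). intro n. apply (bound_compact _ _ (fun p => fst p n) cK).
    intros m p Hp. exists (S n). intros q Hq. destruct q as [q1 q2]. destruct (Hq n ltac:(lia)) as [E _]. simpl in *. rewrite E; auto. }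
  assert (H2 : exists M : nat -> Z, forall n, forall p, Kset p -> (Z.abs (snd p n) <= M n)%Z).
  { apply (choiceZ (fun n M => forall p, Kset p -> (Z.abs (snd p n) <= M)%Z)). intro n. apply (bound_compact _ _ (fun p => snd p n) cK).
    intros m p Hp. exists (S n). intros q Hq. destruct q as [q1 q2]. destruct (Hq n ltac:(lia)) as [_ E]. simpl in *. rewrite E; auto. }
  destruct H1 as [M1 H1]; destruct H2 as [M2 H2].
  exists (fun n => (- M1 n)%Z, fun n => (- 2 * M1 n - M2 n)%Z).
  intros [k1 k2] Hk n. specialize (H1 n _ Hk). specialize (H2 n _ Hk). unfold addZw2, addZw in *; cbn [fst snd] in *. lia.
Qed.

Lemma partc : ~ HaarMeagerZw2 Cset.
Proof.
  apply (not_HM_gen _ (fun x => (fun n => (- fst x n)%Z, fun n => (- snd x n)%Z))).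
  { intros [x1 x2] [y1 y2]. unfold addZw2; simpl. f_equal; apply zw_neg. }
  intros K f cK cf.
  destruct (part4 (fun p => exists k, p = f k)) as [x Hx].
  2:{ exists x. intro k. apply Hx. eauto. }
  intros I U HU Hc.
  destruct (cK I (fun i k => U i (f k))) as [l Hl].
  { intro i. apply cf, HU. }
  { intros k _. apply (Hc (f k)). eauto. }
  exists l. intros p [k Hk]. subst. apply Hl; auto.
Qed.

Lemma cyl_open n (w : nat -> bool) : ms_open Cantor (fun b => agree n w b).
Proof.
  intros b Hb. exists ((1/2)^n). split. apply hp_pos.
  intros c Hc. apply dist_agree in Hc. intros i Hi. rewrite Hb, Hc; auto.
Qed.

Lemma subsingleton_nd (P : Cantor -> Prop) :
  (forall a b, P a -> P b -> a = b) -> nowhere_dense (ms_open Cantor) P.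
Proof.
  intros Hs z [U [HUo [HUz HU]]].
  destruct (HUo z HUz) as [eps [He Heps]].
  destruct (hp_small eps He) as [m Hm].
  set (z' := fun i => if Nat.eqb i (S m) then negb (z (S m)) else z i).
  assert (Hz' : U z').
  { apply Heps. simpl. apply Rlt_trans with ((1/2)^m); auto. apply agree_dist.
    intros i Hi. unfold z'. destruct (Nat.eqb_spec i (S m)); [lia|auto]. }
  destruct (HU z HUz _ (cyl_open (S (S m)) z)) as [p1 [A1 P1]].
  { intros i _; auto. }
  destruct (HU z' Hz' _ (cyl_open (S (S m)) z')) as [p2 [A2 P2]].
  { intros i _; auto. }
  pose proof (Hs _ _ P1 P2). subst p2.
  specialize (A1 (S m) ltac:(lia)). specialize (A2 (S m) ltac:(lia)).
  unfold z' in A2. rewrite Nat.eqb_refl in A2. rewrite <- A1 in A2.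
  destruct (z (S m)); discriminate.
Qed.

Lemma parta (t : Zw) : HaarMeagerZw (fun s => Cset (s, t)).
Proof.
  set (B := fun s : Zw => Cset (s, t)).
  exists B. split; [|split; [auto|]].
  { apply (Borel_ext _ (fun x => ~ ~ B x)).
    - apply Borel_compl, Borel_open. intros x Hx.
      unfold B, Cset in Hx; simpl in Hx.
      apply not_all_ex_not in Hx as [n Hn]. exists (S n).
      intros y Hy C. apply Hn. rewrite <- (Hy n ltac:(lia)). apply (C n).
    - intro x; split; [apply NNPP|auto]. }
  exists Cantor, (fun a n => if (a n : bool) then (Z.abs (t n) + 1)%Z else 0%Z).
  split. apply Cantor_compact. split. exists (fun _ => false); auto. split.
  - intros U HU a Ha. destruct (HU _ Ha) as [m Hm]. exists ((1/2)^m). split. apply hp_pos.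
    intros b Hb. apply Hm. intros i Hi. apply dist_agree in Hb. rewrite (Hb i Hi). auto.
  - intros x. exists (fun _ (a : Cantor) => translate addZw x B
      (fun n => if (a : nat -> bool) n then (Z.abs (t n) + 1)%Z else 0%Z)).
    split; [|intros a Ha; exists 0%nat; exact Ha].
    intros _. apply subsingleton_nd.
    intros a b [s1 [Bs1 E1]] [s2 [Bs2 E2]].
    apply functional_extensionality. intro n.
    pose proof (f_equal (fun g => g n) E1) as F1. pose proof (f_equal (fun g => g n) E2) as F2.
    unfold addZw in F1, F2; simpl in F1, F2.
    specialize (Bs1 n). specialize (Bs2 n). unfold B in *; simpl in *.
    destruct (a n), (b n); auto; lia.
Qed.

Theorem mainTheorem12 :
  (* (a) *)
  (forall t : Zw, HaarMeagerZw (fun s => Cset (s, t))) /\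
  (* (b) *)
  ~ HaarMeagerZw (fun s => ~ HaarMeagerZw (fun t => Cset (s, t))) /\
  (* (c) *)
  ~ HaarMeagerZw2 Cset /\
  (* (c, "indeed") C contains a translate of every compact subset *)
  (forall Kset : Zw * Zw -> Prop, compact_in openZw2 Kset ->
     exists x : Zw * Zw, forall k, Kset k -> Cset (addZw2 x k)).
Proof.
  split. exact parta. split. exact partb. split. exact partc. exact part4.
Qed.
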